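(* Let $\mathcal{C}$ be a covering of a finite set $E$ such that $SH$ is the closure operator of a matroid on $E$. Then $\mathcal{I}_{SH}(\mathcal{C})\subseteq\mathcal{I}(\mathcal{C})$ and $\mathcal{L}_{SH}(M(\mathcal{C}))\subseteq\mathcal{L}(M(\mathcal{C}))$.
   Context: A covering of $E$ is a family of nonempty subsets of $E$ with union $E$. $SH(X)=\bigcup\{K\in\mathcal{C}:K\cap X\neq\emptyset\}$. When $SH$ is the closure operator of a matroid, $\mathcal{I}_{SH}(\mathcal{C})=\{I\subseteq E:x\notin SH(I-\{x\})\ \forall x\in I\}$ is its family of independent sets and $\mathcal{L}_{SH}(M(\mathcal{C}))=\{X:SH(X)=X\}$ its set of closed sets. $\mathcal{I}(\mathcal{C})$ is the family of partial transversals of $\mathcal{C}$ (sets of distinct elements $e_1,\dots,e_k$ with $e_j\in K_{i_j}$ for distinct blocks $K_{i_1},\dots,K_{i_k}$), the independent sets of the transversal matroid $M(\mathcal{C})$, and $\mathcal{L}(M(\mathcal{C}))$ is the set of closed sets of $M(\mathcal{C})$, where $cl(X)=\{a:r(X\cup\{a\})=r(X)\}$. *)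

(* Defs.v *)
From mathcomp Require Import all_boot all_order.
Set Implicit Arguments. Unset Strict Implicit. Unset Printing Implicit Defensive.

(* The ground set E is the whole finite type T; a covering is a set of blocks. *)
Section Defs.
Variable T : finType.
Implicit Types (C : {set {set T}}) (X I : {set T}).

Definition covering C : Prop :=
  (forall K, K \in C -> K != set0) /\ \bigcup_(K in C) K = [set: T].

Definition SH C X : {set T} := \bigcup_(K in C | K :&: X != set0) K.

Definition is_matroid_closure (cl : {set T} -> {set T}) : Prop :=
  [/\ (forall X, X \subset cl X),
      (forall X Y : {set T}, X \subset Y -> cl X \subset cl Y),
      (forall X, cl (cl X) = cl X) &
      (forall (X : {set T}) (x y : T), y \in cl (x |: X) -> y \notin cl X -> x \in cl (y |: X))].

Definition indep_SH C I : bool := [forall x in I, x \notin SH C (I :\ x)].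

Definition ptrans C I : bool :=
  [exists f : {ffun T -> {set T}},
     [forall x in I, (f x \in C) && (x \in f x)] &&
     [forall x in I, forall y in I, (f x == f y) ==> (x == y)]].

Definition trank C X : nat := \max_(I : {set T} | (I \subset X) && ptrans C I) #|I|.
Definition tcl C X : {set T} := [set a | trank C (a |: X) == trank C X].

End Defs.

(* Main.v *)
Require Import Defs.
From mathcomp Require Import all_boot all_order.

Lemma pickblock (T : finType) (C : {set {set T}}) (x : T) :
  covering C -> exists2 K, K \in C & x \in K.
Proof.
case=> _ hU; have : x \in \bigcup_(K in C) K by rewrite hU inE.
by case/bigcupP=> K KC xK; exists K.
Qed.

Lemma notSH (T : finType) (C : {set {set T}}) X x K :
  x \notin SH C X -> K \in C -> x \in K -> K :&: X = set0.
Proof.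
move=> hx KC xK; apply/eqP; apply: contraNT hx => hn.
by apply/bigcupP; exists K => //; rewrite KC hn.
Qed.

Theorem proposition26 (T : finType) (C : {set {set T}}) :
  covering C -> is_matroid_closure (SH C) ->
  (forall I : {set T}, indep_SH C I -> ptrans C I) /\
  (forall X : {set T}, SH C X = X -> tcl C X = X).
Proof.
move=> hC _; split.
  move=> I /forall_inP hI.
  apply/existsP; exists [ffun x => odflt set0 [pick K in C | x \in K]].
  have hf x : (odflt set0 [pick K in C | x \in K] \in C) && (x \in odflt set0 [pick K in C | x \in K]).
    case: pickP => [K /andP[-> ->] //|hn].
    by case: (@pickblock _ C x hC) => K KC xK; move: (hn K); rewrite KC xK.
  apply/andP; split; apply/forall_inP => x xI; rewrite ffunE ?hf //.
  apply/forall_inP => y yI; rewrite ffunE; apply/implyP => /eqP e.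
  apply/eqP; apply: contraNeq (hI x xI) => nxy.
  case/andP: (hf x) => KC xK; case/andP: (hf y) => _; rewrite -e => yK.
  apply/bigcupP; exists (odflt set0 [pick K in C | x \in K]) => //.
  rewrite KC /=; apply/set0Pn; exists y; rewrite !inE yK yI andbT.
  by rewrite eq_sym.
move=> X hX; apply/setP => a; rewrite inE.
case aX: (a \in X); first by rewrite (setUidPr (_ : [set a] \subset X)) ?eqxx ?sub1set.
apply/negbTE; rewrite neq_ltn; apply/orP; right.
have hna : a \notin SH C X by rewrite hX aX.
case: (@pickblock _ C a hC) => Ka KaC aKa.
have K0 := @notSH _ C X a Ka hna KaC aKa.
rewrite /trank.
have hpos : 0 < \max_(I : {set T} | (I \subset a |: X) && ptrans C I) #|I|.
  apply: (leq_trans _ (leq_bigmax_cond [set a] _)); first by rewrite cards1.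
  rewrite sub1set setU11 /=; apply/existsP; exists [ffun=> Ka].
  apply/andP; split; apply/forall_inP=> x; rewrite inE => /eqP ->.
    by rewrite ffunE KaC aKa.
  apply/forall_inP=> y; rewrite inE => /eqP ->; by apply/implyP.
rewrite -(prednK hpos) ltnS; apply/bigmax_leqP => I /andP[IX /existsP[f /andP[/forall_inP hf /forall_inP hi]]].
rewrite -ltnS (prednK hpos).
have aI : a \notin I by apply: contraFN aX => /(subsetP IX).
apply: (leq_trans _ (leq_bigmax_cond (a |: I) _)); first by rewrite cardsU1 aI.
rewrite setUS //=.
apply/existsP; exists [ffun y => if y == a then Ka else f y].
have hfX y : y \in I -> f y == Ka = false.
  move=> yI; apply/negbTE/eqP => e; case/andP: (hf y yI) => _ yf.
  have : y \in Ka :&: X by rewrite inE -e yf (subsetP IX).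
  by rewrite K0 inE.
apply/andP; split; apply/forall_inP => x /setU1P[->|xI]; rewrite !ffunE.
- by rewrite eqxx KaC aKa.
- have xa : (x == a) = false by apply/negbTE; apply: contraNneq aI => <-.
  by rewrite xa hf.
- apply/forall_inP => y /setU1P[->|yI]; rewrite !ffunE; first by apply/implyP.
  have ya : (y == a) = false by apply/negbTE; apply: contraNneq aI => <-.
  by rewrite eqxx ya eq_sym hfX.
- have xa : (x == a) = false by apply/negbTE; apply: contraNneq aI => <-.
  apply/forall_inP => y /setU1P[->|yI]; rewrite !ffunE xa.
    by rewrite eqxx hfX.
  have ya : (y == a) = false by apply/negbTE; apply: contraNneq aI => <-.
  by rewrite ya; apply: (forall_inP (hi x xI)).
Qed.
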